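(* Let $K$ be the fractal percolation on $[0,1]$ with parameters $M\in\mathbb{N}_{\geq2}$ and $p\in(0,1]$, $D=\log(Mp)/\log M$, $r=1/M$, and $\overline{\mathcal V}_k(K):=\lim_{n\to\infty}r^{n(D-k)}\mathbb{E}V_k(K_n)$ for $k=0,1$. Then these limits exist and $$\overline{\mathcal V}_1(K)=1,\qquad \overline{\mathcal V}_0(K)=\frac{M(1-p)}{M-p}.$$
   Context: Fractal percolation on $[0,1]$: $K_0=[0,1]$; given $K_{n-1}$, a union of closed grid intervals of length $M^{-(n-1)}$, each is divided into $M$ closed subintervals of length $M^{-n}$, each kept independently (of everything else) with probability $p$; $K_n$ is the union of kept subintervals. $V_1$ is length and $V_0$ the number of connected components. *)

(* Defs.v *)
From HB Require Import structures.
From mathcomp Require Import all_boot all_order all_algebra.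
From mathcomp Require Import finmap all_classical all_reals all_analysis.
Set Implicit Arguments. Unset Strict Implicit. Unset Printing Implicit Defensive.
Import Order.TTheory GRing.Theory Num.Theory numFieldNormedType.Exports.
Local Open Scope classical_set_scope.
Local Open Scope ring_scope.

(* Sample space for the first n levels of fractal percolation on [0,1]:
   one coin for every grid interval of level j+1 (j < n), i.e. for every
   index i < M^(j+1) (the interval [i/M^(j+1), (i+1)/M^(j+1)]). *)
Definition Omega (M n : nat) := {dffun forall j : 'I_n, {ffun 'I_(M ^ j.+1) -> bool}}.

(* coin w j i = the coin of interval i at level j+1 (false if out of range) *)
Definition coin (M n : nat) (w : Omega M n) (j i : nat) : bool :=
  match insub j with
  | Some jj => match insub i with Some ii => w jj ii | None => false end
  | None => false
  end.

Definition weight {R : realType} (M n : nat) (p : R) (w : Omega M n) : R :=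
  \prod_(j : 'I_n) \prod_(i : 'I_(M ^ j.+1)) (if w j i then p else 1 - p).

Definition Expect {R : realType} (M n : nat) (p : R) (f : Omega M n -> R) : R :=
  \sum_(w : Omega M n) weight p w * f w.

(* The level-n interval with index i (i < M^n) belongs to K_n iff it and all
   its ancestors (at levels 1..n) were kept. *)
Definition kept (M n : nat) (w : Omega M n) (i : nat) : bool :=
  [forall j : 'I_n, coin w j (i %/ M ^ (n - j.+1))].

Definition Kn {R : realType} (M n : nat) (w : Omega M n) : set R :=
  \bigcup_(i in [set i : nat | (i < M ^ n)%N /\ kept w i])
     `[(i%:R / (M ^ n)%:R : R), i.+1%:R / (M ^ n)%:R]%classic.

Definition V1 {R : realType} (A : set R) : R := fine (lebesgue_measure A).

(* V_0 = number of connected components (sets here are finite unions of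
   closed intervals, so the set of components is finite) *)
Definition V0 {R : realType} (A : set R) : R :=
  (#|` fset_set [set connected_component A x | x in A]|)%fset%:R.

(* Main.v *)
Require Import Defs.
From HB Require Import structures.
From mathcomp Require Import all_boot all_order all_algebra.
From mathcomp Require Import finmap all_classical all_reals all_analysis.
From mathcomp Require Import ring lra.
Import Order.TTheory GRing.Theory Num.Theory numFieldNormedType.Exports.
Local Open Scope classical_set_scope.
Local Open Scope ring_scope.

Section A.
Variable R : realType.
Variables M n : nat.

Definition Tn := {j : 'I_n & 'I_(M ^ j.+1)}.
Definition toF (w : Omega M n) : {ffun Tn -> bool} := [ffun s => w (tag s) (tagged s)].
Definition ofF (f : {ffun Tn -> bool}) : Omega M n :=
  [ffun j => [ffun i => f (Tagged (fun j : 'I_n => 'I_(M ^ j.+1)) i)]].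

Lemma ofFK : cancel ofF toF.
Proof. by move=> f; apply/ffunP => -[j i]; rewrite !ffunE. Qed.
Lemma toFK : cancel toF ofF.
Proof. by move=> w; apply/ffunP => j; apply/ffunP => i; rewrite !ffunE. Qed.

Lemma prod_sum (g : forall j : 'I_n, 'I_(M ^ j.+1) -> bool -> R) :
  \sum_(w : Omega M n) \prod_(j : 'I_n) \prod_(i : 'I_(M ^ j.+1)) g j i (w j i) =
  \prod_(j : 'I_n) \prod_(i : 'I_(M ^ j.+1)) (g j i true + g j i false).
Proof.
rewrite (reindex ofF); last by apply: onW_bij; exists toF; [exact: ofFK| exact: toFK].
rewrite sig_big_dep /=.
have -> : \prod_(p : {i : 'I_n & 'I_(M ^ i.+1)} | true) (g (tag p) (tagged p) true + g (tag p) (tagged p) false)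
  = \prod_(s : Tn) \sum_(b : bool) g (tag s) (tagged s) b.
  by apply: eq_bigr => s _; rewrite big_bool.
rewrite (bigA_distr_bigA (fun (s : Tn) b => g (tag s) (tagged s) b)) /=.
apply: eq_bigr => f _.
rewrite sig_big_dep /=.
by apply: eq_bigr => -[j i] _; rewrite !ffunE.
Qed.
End A.


Section A2.
Variable R : realType.
Variables M n : nat.

Lemma coinE (w : Omega M n) (j : 'I_n) (i : 'I_(M ^ j.+1)) : coin w j i = w j i.
Proof.
rewrite /coin; case: insubP => [jj _ /val_inj Ej|]; last by rewrite ltn_ord.
subst jj; case: insubP => [ii _ /val_inj -> //|]; by rewrite ltn_ord.
Qed.

Lemma anc_lt (i : nat) (j : 'I_n) : (i < M ^ n)%N -> (i %/ M ^ (n - j.+1) < M ^ j.+1)%N.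
Proof.
move=> Hi; have M0 : (0 < M)%N.
  move: Hi; case: (posnP M) => [->|//]; rewrite exp0n //.
  exact: (leq_ltn_trans (leq0n _) (ltn_ord j)).
rewrite ltn_divLR ?expn_gt0 ?M0 // -expnD subnKC //; exact: ltn_ord.
Qed.

Lemma prod_pred2 (I : finType) (a b : I) (F : I -> R) :
  \prod_(i | (i == a) || (i == b)) F i = if a == b then F a else F a * F b.
Proof.
case: eqP => [->|ne]; first by rewrite (big_pred1 b) // => x; rewrite /= orbb.
rewrite (bigD1 a) /=; last by rewrite eqxx.
congr (_ * _); rewrite (big_pred1 b) // => x /=.
case: (eqVneq x a) => [->|] /=; first by apply/esym/eqP.
by rewrite andbT.
Qed.

Lemma prod_bool (I : finType) (b : I -> bool) :
  \prod_(i : I) ((b i)%:R : R) = ([forall i, b i])%:R.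
Proof.
case: forallP => H; first by rewrite big1 // => i _; rewrite H.
have [i Hi] : exists i, ~~ b i by apply/existsP; rewrite -negb_forall; apply/forallP.
by rewrite (bigD1 i) //= (negbTE Hi) mul0r.
Qed.

Lemma kept_prod (w : Omega M n) i i' : (i < M ^ n)%N -> (i' < M ^ n)%N ->
  ((kept w i && kept w i')%:R : R) = \prod_(j : 'I_n) \prod_(ii : 'I_(M ^ j.+1))
     (if (val ii == i %/ M ^ (n - j.+1))%N || (val ii == i' %/ M ^ (n - j.+1))%N
      then ((w j ii)%:R : R) else 1).
Proof.
move=> Hi Hi'.
transitivity (\prod_(j : 'I_n) ((w j (Ordinal (anc_lt _ j Hi)) && w j (Ordinal (anc_lt _ j Hi')))%:R : R)).
  rewrite prod_bool /kept; congr ((nat_of_bool _)%:R).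
  have C1 : forall j : 'I_n, coin w j (i %/ M ^ (n - j.+1)) = w j (Ordinal (anc_lt _ j Hi)).
    by move=> j; exact: (coinE w j (Ordinal (anc_lt _ j Hi))).
  have C2 : forall j : 'I_n, coin w j (i' %/ M ^ (n - j.+1)) = w j (Ordinal (anc_lt _ j Hi')).
    by move=> j; exact: (coinE w j (Ordinal (anc_lt _ j Hi'))).
  apply/idP/idP.
    by case/andP => /forallP H1 /forallP H2; apply/forallP => j; rewrite -C1 -C2 H1 H2.
  move/forallP => H; apply/andP; split; apply/forallP => j; [rewrite C1 | rewrite C2];
    by case/andP: (H j).
apply: eq_bigr => j _; rewrite -big_mkcond /=.
have E : forall ii : 'I_(M ^ j.+1), ((val ii == i %/ M ^ (n - j.+1))%N || (val ii == i' %/ M ^ (n - j.+1))%N)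
   = (ii == Ordinal (anc_lt _ j Hi)) || (ii == Ordinal (anc_lt _ j Hi')) by [].
rewrite (eq_bigl _ _ E) prod_pred2.
case: eqP => [<-|_]; first by rewrite andbb.
by rewrite -natrM; case: (w j _); case: (w j _).
Qed.

Lemma Expect_pair (p : R) i i' : (i < M ^ n)%N -> (i' < M ^ n)%N ->
  Expect p (fun w : Omega M n => ((kept w i && kept w i')%:R : R)) =
  \prod_(j : 'I_n) p ^+ (i %/ M ^ (n - j.+1) != i' %/ M ^ (n - j.+1))%N.+1.
Proof.
move=> Hi Hi'; rewrite /Expect /weight.
under eq_bigr do rewrite kept_prod // -big_split /=.
under eq_bigr do under eq_bigr do rewrite -big_split /=.
rewrite (@prod_sum R M n (fun j ii b => (if b then p else 1 - p) *
   (if (val ii == i %/ M ^ (n - j.+1))%N || (val ii == i' %/ M ^ (n - j.+1))%N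
      then ((b)%:R : R) else 1))).
apply: eq_bigr => j _.
transitivity (\prod_(ii : 'I_(M ^ j.+1) | (val ii == i %/ M ^ (n - j.+1))%N || (val ii == i' %/ M ^ (n - j.+1))%N) p).
  rewrite [RHS]big_mkcond /=; apply: eq_bigr => ii _.
  by case: ifP => _ /=; rewrite ?mulr1 ?mulr0 ?addr0 // addrC subrK.
have E : forall ii : 'I_(M ^ j.+1), ((val ii == i %/ M ^ (n - j.+1))%N || (val ii == i' %/ M ^ (n - j.+1))%N)
   = (ii == Ordinal (anc_lt _ j Hi)) || (ii == Ordinal (anc_lt _ j Hi')) by [].
rewrite (eq_bigl _ _ E).
rewrite prod_pred2; case: eqP => [E1|NE].
  have E3 : (i %/ M ^ (n - j.+1))%N = (i' %/ M ^ (n - j.+1))%N by move: E1 => [].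
  by rewrite E3 eqxx expr1.
case: eqP => [E2|_]; last by rewrite expr2.
by case: NE; apply: val_inj.
Qed.
End A2.


Section C.
Variable R : realType.
Variable M : nat.
Hypothesis M0 : (0 < M)%N.
Variable p : R.

Definition P n t : R := \prod_(j < n) (if (M ^ (n - j.+1) %| t)%N then p else 1).
Definition G n : R := \sum_(t < M ^ n) P n t.

Lemma Expect_single n i : (i < M ^ n)%N ->
  Expect p (fun w : Omega M n => ((kept w i && kept w i)%:R : R)) = p ^+ n.
Proof.
move=> Hi; rewrite Expect_pair //.
under eq_bigr do rewrite eqxx /= expr1.
by rewrite prodr_const card_ord.
Qed.

Lemma Expect_next n i : (i.+1 < M ^ n)%N ->
  Expect p (fun w : Omega M n => ((kept w i && kept w i.+1)%:R : R)) = p ^+ n * P n i.+1.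
Proof.
move=> Hi; rewrite Expect_pair //; last exact: ltnW.
rewrite /P -[in p ^+ n](card_ord n) -prodr_const -big_split /=.
apply: eq_bigr => j _.
have Hd : (0 < M ^ (n - j.+1))%N by rewrite expn_gt0 M0.
rewrite (divnS _ Hd).
case: (M ^ (n - j.+1) %| i.+1)%N => /=.
  by rewrite add1n neq_ltn ltnSn expr2.
by rewrite add0n eqxx expr1 mulr1.
Qed.

Lemma split_sum (F : nat -> R) a b :
  \sum_(0 <= t < a * b) F t = \sum_(0 <= q < a) \sum_(0 <= r < b) F (q * b + r)%N.
Proof.
elim: a => [|a IH]; first by rewrite mul0n !big_geq.
rewrite big_nat_recr //= -IH mulSn addnC (big_cat_nat _ (leq_addr _ _)) //=.
congr (_ + _).
have -> : \sum_(a * b <= i < a * b + b) F i = \sum_(0 + a * b <= i < a * b + b) F i by rewrite add0n.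
rewrite big_addn addKn; apply: eq_bigr => r _.
by rewrite addnC.
Qed.

Lemma P_succ n q r : (r < M)%N ->
  P n.+1 (q * M + r)%N = (if r == 0%N then P n q else 1) * p.
Proof.
move=> Hr; rewrite /P big_ord_recr /= subnn expn0 dvd1n; congr (_ * _).
have E : forall j : 'I_n, (M ^ (n.+1 - (widen_ord (leqnSn n) j).+1) %| q * M + r)%N
   = (r == 0%N) && (M ^ (n - j.+1) %| q)%N.
  move=> j /=; rewrite subSn; last exact: ltn_ord.
  case: (eqVneq r 0%N) => [->|rn0] /=.
    by rewrite addn0 expnSr dvdn_pmul2r.
  apply/negP => H; have : (M %| q * M + r)%N.
    by apply: dvdn_trans H; rewrite expnS dvdn_mulr.
  rewrite dvdn_addr ?dvdn_mull // => /dvdn_leq; rewrite lt0n rn0 => /(_ isT).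
  by rewrite leqNgt Hr.
case: (eqVneq r 0%N) => [r0|rn0].
  by apply: eq_bigr => j _; rewrite E r0.
by rewrite big1 // => j _; rewrite E (negbTE rn0).
Qed.

Lemma G_succ n : G n.+1 = p * G n + (M - 1)%:R * (M ^ n)%:R * p.
Proof.
rewrite /G -(big_mkord xpredT (P n.+1)) expnSr split_sum.
rewrite -(big_mkord xpredT (P n)) big_distrr /=.
have -> : (M - 1)%:R * (M ^ n)%:R * p = \sum_(0 <= q < M ^ n) ((M-1)%:R * p) :> R.
  by rewrite sumr_const_nat subn0 mulrAC mulr_natr.
rewrite -big_split /=; apply: eq_big_nat => q _.
rewrite big_ltn // P_succ // eqxx mulrC; congr (_ + _).
rewrite (eq_big_nat _ _ (F2 := fun _ => p)) => [|r /andP[Hr1 Hr2]].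
  by rewrite sumr_const_nat mulr_natl.
by rewrite P_succ // eqn0Ngt Hr1 mul1r.
Qed.

Lemma P0 n : P n 0 = p ^+ n.
Proof. by rewrite /P; under eq_bigr do rewrite dvdn0; rewrite prodr_const card_ord. Qed.

Lemma G0 : G 0 = 1.
Proof. by rewrite /G expn0 big_ord1 /P big_ord0. Qed.
End C.


Section D.
Variable R : realType.
Variable M : nat.
Hypothesis M2 : (2 <= M)%N.
Variable p : R.
Hypothesis p01 : 0 < p <= 1.

Let Mgt1 : 1 < (M%:R : R). Proof. by rewrite ltr1n. Qed.
Let Mgt0 : 0 < (M%:R : R). Proof. exact: lt_trans Mgt1. Qed.
Let pgt0 : 0 < p. Proof. by case/andP: p01. Qed.

Lemma rpowE (x : R) n : (M%:R : R)^-1 `^ (n%:R * x) = ((M%:R : R)^-1 `^ x) ^+ n.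
Proof. by rewrite mulrC powRrM powR_mulrn // powR_ge0. Qed.

Lemma rpow1 : let D := ln (M%:R * p) / ln (M%:R : R) in
  (M%:R : R)^-1 `^ (D - 1) = p^-1.
Proof.
move=> D; rewrite /powR invr_eq0 (negbTE (lt0r_neq0 Mgt0)).
have lM : ln (M%:R : R) != 0 by rewrite gt_eqF // ln_gt0.
rewrite lnV ?posrE // /D lnM ?posrE //.
have -> : ((ln (M%:R : R) + ln p) / ln M%:R - 1) * - ln (M%:R : R) = - ln p.
  by field.
by rewrite expRN lnK // posrE.
Qed.

Lemma rpow0 : let D := ln (M%:R * p) / ln (M%:R : R) in
  (M%:R : R)^-1 `^ (D - 0) = (M%:R * p)^-1.
Proof.
move=> D; rewrite /powR invr_eq0 (negbTE (lt0r_neq0 Mgt0)) subr0.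
have lM : ln (M%:R : R) != 0 by rewrite gt_eqF // ln_gt0.
rewrite lnV ?posrE // /D.
have -> : ln (M%:R * p) / ln (M%:R : R) * - ln (M%:R : R) = - ln (M%:R * p).
  by field.
by rewrite expRN lnK // posrE mulr_gt0.
Qed.

Definition ds : R := (M%:R - 1) * p / (M%:R - p).

Lemma lim0 : (fun n : nat => ((M%:R * p) ^+ n)^-1 *
      ((M ^ n)%:R * p ^+ n * (1 - ds) + p ^+ n * p ^+ n * ds)) @ \oo --> 1 - ds.
Proof.
have Mp : M%:R - p != 0 :> R.
  by rewrite subr_eq0 gt_eqF //; apply: le_lt_trans Mgt1; case/andP: p01.
have -> : (fun n : nat => ((M%:R * p) ^+ n)^-1 *
      ((M ^ n)%:R * p ^+ n * (1 - ds) + p ^+ n * p ^+ n * ds)) =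
      (fun n => (1 - ds) + (GRing.exp (p / M%:R) \* cst ds) n).
  apply: funext => n /=; rewrite natrX exprMn expr_div_n.
  have h1 : (M%:R : R) ^+ n != 0 by rewrite expf_neq0 // lt0r_neq0.
  have h2 : p ^+ n != 0 by rewrite expf_neq0 // lt0r_neq0.
  move: h1 h2; set a := (M%:R : R) ^+ n; set b := p ^+ n => h1 h2.
  by field; rewrite h1 h2.
rewrite -[X in _ --> X]addr0; apply: cvgD; first exact: cvg_cst.
rewrite -(mul0r ds); apply: cvgM; last exact: cvg_cst.
apply: cvg_expr; rewrite ger0_norm ?divr_ge0 // ?ltW //.
rewrite ltr_pdivrMr // mul1r; apply: le_lt_trans Mgt1; by case/andP: p01.
Qed.

Lemma dsE : 1 - ds = M%:R * (1 - p) / (M%:R - p).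
Proof.
have Mp : M%:R - p != 0 :> R.
  by rewrite subr_eq0 gt_eqF //; apply: le_lt_trans Mgt1; case/andP: p01.
by rewrite /ds; field.
Qed.

End D.


Section B.
Variable R : realType.
Variable N : nat.
Hypothesis N0 : (0 < N)%N.
Variable kb : nat -> bool.

Definition a (i : nat) : R := i%:R / N%:R.
Definition U : set R :=
  \bigcup_(i in [set i : nat | (i < N)%N /\ kb i]) `[(i%:R / N%:R : R), i.+1%:R / N%:R]%classic.

Let Npos : 0 < (N%:R : R). Proof. by rewrite ltr0n. Qed.

Lemma aLe i j : (a i <= a j) = (i <= j)%N.
Proof. by rewrite /a ler_pM2r ?invr_gt0 // ler_nat. Qed.
Lemma aLt i j : (a i < a j) = (i < j)%N.
Proof. by rewrite /a ltr_pM2r ?invr_gt0 // ltr_nat. Qed.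

Lemma UP x : U x <-> exists i, [/\ (i < N)%N, kb i & a i <= x <= a i.+1].
Proof.
split.
  by case=> i [iN ki]; rewrite /= in_itv /= => hx; exists i.
by case=> i [iN ki hx]; exists i => //; rewrite /= in_itv.
Qed.

Definition Fh (i : nat) : set R := if kb i then `[a i, a i.+1[%classic else set0.
Definition Ee : set R := \bigcup_(i in [set i : nat | (i < N)%N /\ kb i]) [set a i.+1].

Lemma U_split : U = (\big[setU/set0]_(i < N) Fh i) `|` Ee.
Proof.
rewrite -bigcup_mkord; apply/seteqP; split => x.
  move/UP => [i [iN ki /andP[h1 h2]]].
  case: (ltrP x (a i.+1)) => h3.
    by left; exists i => //; rewrite /Fh ki /= in_itv /= h1 h3.
  by right; exists i => //; apply/eqP; rewrite eq_le h2 h3.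
case=> [[i /= iN]|[i [iN ki] ->]].
  rewrite /Fh; case: ifP => ki //=; rewrite in_itv /= => /andP[h1 h2].
  by apply/UP; exists i; split => //; rewrite h1 ltW.
by apply/UP; exists i; split => //; rewrite lexx andbT aLe.
Qed.

Lemma Ee0 : lebesgue_measure Ee = 0%E.
Proof.
apply: countable_lebesgue_measure0; apply: bigcup_countable.
  exact: countableP.
by move=> i _; exact: countable1.
Qed.

Lemma Fh_meas i : measurable (Fh i).
Proof. by rewrite /Fh; case: ifP. Qed.

Lemma Fh_triv : trivIset setT Fh.
Proof.
move=> i j _ _ [x []]; rewrite /Fh.
case: (kb i) => //; case: (kb j) => //=; rewrite !in_itv /= => /andP[h1 h2] /andP[h3 h4].
have : (i < j.+1)%N by rewrite -aLt; apply: le_lt_trans h4.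
have : (j < i.+1)%N by rewrite -aLt; apply: le_lt_trans h2.
by rewrite !ltnS => hji hij; apply/eqP; rewrite eqn_leq hij hji.
Qed.

Lemma V1U : V1 U = (\sum_(i < N) (kb i)%:R) / N%:R.
Proof.
rewrite /V1 U_split measureU0 //; last exact: Ee0.
- rewrite (@measure_bigsetU _ _ _ (@lebesgue_measure R) Fh Fh_meas Fh_triv N).
  have -> : \sum_(i < N) lebesgue_measure (Fh i) = \sum_(i < N) ((kb i)%:R / N%:R)%:E.
    apply: eq_bigr => i _; rewrite /Fh; case: (kb i); last by rewrite measure0 mul0r.
    rewrite lebesgue_measure_itv /= lte_fin aLt ltnSn /= /a -EFinD; congr (_%:E).
    by rewrite -mulrBl -natrB // subSnn.
  by rewrite sumEFin /= mulr_suml.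
- by apply: bigsetU_measurable => i _; exact: Fh_meas.
- by apply: bigcup_measurable => i _; exact: measurable_set1.
Qed.
End B.


Section B2.
Variable R : realType.
Variable N : nat.
Hypothesis N0 : (0 < N)%N.
Variable kb : nat -> bool.

Let A : set R := U R N kb.
Let aa := a R N.
Definition kk i := (i < N)%N && kb i.
Definition start s := kk s && ((s == 0)%N || ~~ kk s.-1).

Lemma UPk x : A x <-> exists i, kk i /\ aa i <= x <= aa i.+1.
Proof.
rewrite /A UP; split.
  by case=> i [h1 h2 h3]; exists i; rewrite /kk h1 h2.
by case=> i [/andP[h1 h2] h3]; exists i.
Qed.

Lemma run_start l : kk l -> exists s, [/\ start s, (s <= l)%N & forall t, (s <= t <= l)%N -> kk t].
Proof.
elim: l => [|l IH] kl.
  exists 0%N; split => //; first by rewrite /start kl.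
  by move=> t; rewrite leqn0 => /eqP ->.
case kl': (kk l).
  have [s [ss sl st]] := IH kl'; exists s; split => //; first exact: leqW.
  move=> t /andP[h1 h2]; case: (ltngtP t l.+1) h2 => //; last by move=> ->.
  by rewrite ltnS => h3 _; apply: st; rewrite h1 h3.
exists l.+1; split => //; first by rewrite /start kl /= kl'.
by move=> t; rewrite -eqn_leq => /eqP <-.
Qed.

Lemma block d s : (forall t, (s <= t <= s + d)%N -> kk t) ->
  `[aa s, aa (s + d).+1]%classic `<=` A.
Proof.
elim: d => [|d IH] H x; rewrite /= in_itv /= => /andP[h1 h2].
  apply/UPk; exists s; split; [by apply: H; rewrite addn0 leqnn | by rewrite addn0 in h2; rewrite h1].
case: (lerP x (aa (s + d).+1)) => h3.
  apply: IH; last by rewrite /= in_itv /= h1 h3.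
  by move=> t /andP[t1 t2]; apply: H; rewrite t1 addnS (leq_trans t2).
apply/UPk; exists (s + d).+1; split; last by rewrite (ltW h3) -addnS.
by apply: H; rewrite addnS leqnn andbT (leq_trans (leq_addr d s)).
Qed.

Lemma mid_out t : ~~ kk t -> ~ A ((aa t + aa t.+1) / 2).
Proof.
move=> kt /UPk [i [ki /andP[h1 h2]]].
have lt1 : aa t < aa t.+1 by rewrite /aa aLt.
have : aa i < aa t.+1 by apply: le_lt_trans h1 _; lra.
have : aa t < aa i.+1 by apply: lt_le_trans h2; lra.
rewrite /aa !aLt // !ltnS => h3 h4.
have E : i = t by apply/eqP; rewrite eqn_leq h3 h4.
by move: kt; rewrite -E ki.
Qed.

Lemma itv_conn (u v : R) : connected (`[u, v]%classic : set R).
Proof. by apply/connected_intervalP; exact: interval_is_interval. Qed.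

Lemma comp_cover x : A x -> exists s, start s /\ connected_component A x = connected_component A (aa s).
Proof.
move=> /UPk [l [kl /andP[h1 h2]]].
have [s [ss sl st]] := run_start _ kl.
exists s; split => //.
have sub : `[aa s, aa l.+1]%classic `<=` A.
  have -> : l = (s + (l - s))%N by rewrite subnKC.
  by apply: block; rewrite subnKC.
apply: same_connected_component.
apply: (connected_component_max _ sub (itv_conn _ _)).
  by rewrite /= in_itv /= h2 andbT; apply: le_trans h1; rewrite /aa aLe.
by rewrite /= in_itv /= lexx /= /aa aLe // leqW.
Qed.

Lemma start_inj s s' : start s -> start s' ->
  connected_component A (aa s) = connected_component A (aa s') -> s = s'.
Proof.
wlog : s s' / (s < s')%N.
  move=> W h h' E; case: (ltngtP s s') => // H.
    exact: W.
  by apply/esym/W => //.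
move=> ss' /andP[ks _] /andP[ks' /orP[/eqP s'0|ns']] E.
  by rewrite s'0 in ss'.
exfalso.
have C := @component_connected _ A (aa s).
have /connected_intervalP I := C.
have As' : connected_component A (aa s) (aa s').
  by rewrite E; apply: connected_component_refl; apply/UPk; exists s'; rewrite ks' lexx /= /aa aLe.
have As : connected_component A (aa s) (aa s).
  by apply: connected_component_refl; apply/UPk; exists s; rewrite ks lexx /= /aa aLe.
apply: (mid_out _ ns'); apply: (connected_component_sub (x := aa s)).
apply: (I _ _ As As').
have lt1 : aa s'.-1 < aa s'.-1.+1 by rewrite /aa aLt.
have e : s'.-1.+1 = s' by rewrite prednK // (leq_ltn_trans (leq0n s)).
have le1 : aa s <= aa s'.-1.
  rewrite /aa aLe //; have h := ss'; rewrite -e ltnS in h; exact: h.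
rewrite -e; apply/andP; split; lra.
Qed.
End B2.


Section B3.
Variable R : realType.
Variable N : nat.
Hypothesis N0 : (0 < N)%N.
Variable kb : nat -> bool.

Let A : set R := U R N kb.
Let aa := a R N.
Let st := start N kb.
Let f := fun s => connected_component A (aa s).
Let S : {fset nat} := seq_fset tt (seq.filter st (iota 0 N)).

Lemma comp_eq : [set connected_component A x | x in A] = f @` [set` S].
Proof.
apply/seteqP; split => C.
  case=> x Ax <-; have [s [ss E]] := @comp_cover R N N0 kb x Ax.
  exists s; last by rewrite E.
  rewrite /= seq_fsetE mem_filter mem_iota /= add0n /st ss /=.
  by move: ss; rewrite /start /kk => /andP[/andP[]].
case=> s; rewrite /= seq_fsetE mem_filter mem_iota => /andP[ss _] <-.
exists (aa s) => //; apply/(@UPk R N kb); move: ss => /andP[ks _]; exists s; split => //.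
by rewrite lexx /= /aa aLe.
Qed.

Lemma V0_count : V0 A = (count st (iota 0 N))%:R.
Proof.
rewrite /V0 comp_eq fset_set_image; last exact: finite_fset.
rewrite set_fsetK.
have /eqP -> : (#|` (f @` S)%fset| == #|` S|)%N.
  apply/card_in_imfsetP => x y; rewrite !seq_fsetE !mem_filter => /andP[hx _] /andP[hy _].
  exact: (@start_inj R N N0 kb).
congr (_%:R).
rewrite /S -size_filter (size_seq_fset tt) undup_id //.
by rewrite filter_uniq // iota_uniq.
Qed.

Lemma count_sum : ((count st (iota 0 N))%:R : R) = \sum_(i < N) (st i)%:R.
Proof.
rewrite -sum1_count big_mkcond /= natr_sum -(big_mkord xpredT (fun i => (st i)%:R)).
by rewrite /index_iota subn0; apply: eq_bigr => i _; case: (st i).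
Qed.

Lemma V0U : V0 A = \sum_(i < N) (kb i)%:R - \sum_(i < N.-1) (kb i && kb i.+1)%:R.
Proof.
rewrite V0_count count_sum.
have E : forall i : 'I_N, ((st i)%:R : R) = (kb i)%:R - ((val i != 0)%N && kb i && kb i.-1)%:R.
  move=> i; rewrite /st /start /kk ltn_ord /=.
  case: (eqVneq (val i) 0%N) => [->|nz] /=; first by rewrite andbT subr0.
  have -> : (i.-1 < N)%N by rewrite (leq_ltn_trans (leq_pred _)).
  by case: (kb i); case: (kb i.-1); rewrite /= ?subr0 ?subrr.
rewrite (eq_bigr _ (fun i _ => E i)) sumrB; congr (_ - _).
case: N N0 E => // m _ _ /=.
rewrite big_ord_recl /= add0r; apply: eq_bigr => i _.
by rewrite /= andbC.
Qed.
End B3.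


Section F.
Variable R : realType.
Variables M n : nat.
Variable p : R.

Lemma Expect_sum N (F : Omega M n -> nat -> R) :
  Expect p (fun w => \sum_(i < N) F w i) = \sum_(i < N) Expect p (fun w => F w i).
Proof.
rewrite /Expect exchange_big /=; apply: eq_bigr => w _; by rewrite big_distrr.
Qed.

Lemma Expect_mulr (f : Omega M n -> R) c :
  Expect p (fun w => f w * c) = Expect p f * c.
Proof. by rewrite /Expect big_distrl; apply: eq_bigr => w _; rewrite mulrA. Qed.

Lemma Expect_sub (f g : Omega M n -> R) :
  Expect p (fun w => f w - g w) = Expect p f - Expect p g.
Proof. by rewrite /Expect -sumrB; apply: eq_bigr => w _; rewrite mulrBr. Qed.
End F.

Section F2.
Variable R : realType.
Variable M : nat.
Hypothesis M2 : (2 <= M)%N.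
Variable p : R.
Hypothesis p01 : 0 < p <= 1.

Let M0 : (0 < M)%N. Proof. exact: leq_trans M2. Qed.
Let Mgt1 : 1 < (M%:R : R). Proof. by rewrite ltr1n. Qed.

Lemma GE n : G R M p n = (M ^ n)%:R * ds R M p + p ^+ n * (1 - ds R M p).
Proof.
have Mp : M%:R - p != 0 :> R.
  by rewrite subr_eq0 gt_eqF //; apply: le_lt_trans Mgt1; case/andP: p01.
elim: n => [|n IH]; first by rewrite G0 expn0 !expr0 !mul1r addrC subrK.
rewrite G_succ // IH natrB // natrX exprS expnS natrM natrX /ds.
set b := p ^+ n; set c := (M%:R : R) ^+ n.
by field.
Qed.

Lemma E1 n : Expect p (fun w : Omega M n => V1 (Kn w)) = p ^+ n.
Proof.
have N0 : (0 < M ^ n)%N by rewrite expn_gt0 M0.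
have -> : (fun w : Omega M n => (V1 (Kn w) : R)) =
   (fun w => (\sum_(i < M ^ n) (kept w i)%:R) / (M ^ n)%:R : R).
  by apply: funext => w; rewrite -(@V1U R (M ^ n) N0 (kept w)); reflexivity.
rewrite Expect_mulr (@Expect_sum R M n p (M ^ n) (fun w i => (kept w i)%:R)).
have EK : forall i : 'I_(M ^ n), Expect p (fun w : Omega M n => ((kept w i)%:R : R)) = p ^+ n.
  move=> i; rewrite -(@Expect_single R M p n i (ltn_ord i)); congr Expect.
  by apply: funext => w; rewrite andbb.
under eq_bigr => i _ do rewrite EK.
by rewrite sumr_const card_ord -(mulr_natr (p ^+ n) (M ^ n)) mulfK // pnatr_eq0 -lt0n.
Qed.
End F2.

Section F3.
Variable R : realType.
Variable M : nat.
Hypothesis M2 : (2 <= M)%N.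
Variable p : R.
Hypothesis p01 : 0 < p <= 1.

Let M0 : (0 < M)%N. Proof. exact: leq_trans M2. Qed.

Lemma Gsplit n : \sum_(i < (M ^ n).-1) P R M p n i.+1 = G R M p n - p ^+ n.
Proof.
have N0 : (0 < M ^ n)%N by rewrite expn_gt0 M0.
rewrite /G -(P0 R M p n); move: N0; case: (M ^ n)%N => // m _ /=.
by rewrite big_ord_recl [P _ _ _ _ ord0 + _]addrC addrK.
Qed.

Lemma E0 n : Expect p (fun w : Omega M n => V0 (Kn w)) =
  (M ^ n)%:R * p ^+ n * (1 - ds R M p) + p ^+ n * p ^+ n * ds R M p.
Proof.
have N0 : (0 < M ^ n)%N by rewrite expn_gt0 M0.
have -> : (fun w : Omega M n => (V0 (Kn w) : R)) =
   (fun w => \sum_(i < M ^ n) (kept w i)%:R - \sum_(i < (M ^ n).-1) (kept w i && kept w i.+1)%:R : R).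
  by apply: funext => w; rewrite -(@V0U R (M ^ n) N0 (kept w)); reflexivity.
rewrite Expect_sub (@Expect_sum R M n p (M ^ n) (fun w i => (kept w i)%:R)).
rewrite (@Expect_sum R M n p (M ^ n).-1 (fun w i => (kept w i && kept w i.+1)%:R)).
have EK : forall i : 'I_(M ^ n), Expect p (fun w : Omega M n => ((kept w i)%:R : R)) = p ^+ n.
  move=> i; rewrite -(@Expect_single R M p n i (ltn_ord i)); congr Expect.
  by apply: funext => w; rewrite andbb.
under eq_bigr => i _ do rewrite EK.
have EN : forall i : 'I_(M ^ n).-1, Expect p (fun w : Omega M n => ((kept w i && kept w i.+1)%:R : R))
   = p ^+ n * P R M p n i.+1.
  move=> i; apply: Expect_next => //.
  by rewrite -[X in (_ < X)%N](prednK N0) ltnS ltn_ord.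
under [X in _ - X]eq_bigr => i _ do rewrite EN.
rewrite -big_distrr /= Gsplit GE // sumr_const card_ord -(mulr_natr (p ^+ n) (M ^ n)).
by ring.
Qed.
End F3.


Theorem corollary4p3 (R : realType) (M : nat) (p : R) :
  (2 <= M)%N -> 0 < p <= 1 ->
  let D := ln (M%:R * p) / ln (M%:R : R) in
  let r := (M%:R : R)^-1 in
  (fun n : nat => r `^ (n%:R * (D - 1)) * Expect p (fun w : Omega M n => V1 (Kn w)))
     @ \oo --> (1 : R) /\
  (fun n : nat => r `^ (n%:R * (D - 0)) * Expect p (fun w : Omega M n => V0 (Kn w)))
     @ \oo --> (M%:R * (1 - p) / (M%:R - p) : R).
Proof.
move=> M2 p01 D r; have pgt0 : 0 < p by case/andP: p01.
split.
  have -> : (fun n : nat => r `^ (n%:R * (D - 1)) * Expect p (fun w : Omega M n => V1 (Kn w)))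
     = (fun=> 1).
    apply: funext => n; rewrite E1 // /r rpowE (@rpow1 R M M2 p p01) exprVn mulVf //.
    by rewrite expf_neq0 // lt0r_neq0.
  exact: cvg_cst.
rewrite -(@dsE R M M2 p p01).
have -> : (fun n : nat => r `^ (n%:R * (D - 0)) * Expect p (fun w : Omega M n => V0 (Kn w)))
   = (fun n : nat => ((M%:R * p) ^+ n)^-1 *
      ((M ^ n)%:R * p ^+ n * (1 - ds R M p) + p ^+ n * p ^+ n * ds R M p)).
  by apply: funext => n; rewrite E0 // /r rpowE (@rpow0 R M M2 p p01) exprVn.
exact: lim0.
Qed.
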